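(* Let $X$ be a uniformly locally finite metric space and $h\colon X\to\mathbb{R}$ a map, regarded also as the multiplication operator on $\ell_2(X)$. The following are equivalent: (1) the map $h$ is coarse; (2) $\mathrm{dom}(h)$ is invariant under partial translations and, for every $r>0$, $\sup_f\|[h,v_f]\|<\infty$, the supremum over all partial $r$-translations $f$ of $X$; (3) $\mathrm{dom}(h)$ is invariant under partial translations and $\|[h,v_f]\|<\infty$ for every partial translation $f$ of $X$.
   Context: Uniformly locally finite: $\sup_x|B_r(x)|<\infty$ for all $r>0$. The multiplication operator of $h$ has domain $\{\xi\in\ell_2(X):\sum_x|h_x\xi_x|^2<\infty\}$ and $(h\xi)_x=h_x\xi_x$. A map $h\colon X\to\mathbb{R}$ is coarse if for every $r>0$ there is $s>0$ with $|h_x-h_z|\le s$ whenever $d(x,z)\le r$. A partial translation is a bijection $f\colon\mathrm{dom}(f)\subseteq X\to\mathrm{ran}(f)\subseteq X$ with $\sup_{x\in\mathrm{dom}(f)}d(x,f(x))<\infty$; it is a partial $r$-translation if this supremum is at most $r$. $v_f\delta_x=\delta_{f(x)}$ for $x\in\mathrm{dom}(f)$ and $0$ otherwise. A subspace $E$ is invariant under partial translations if $v_f(E)\subseteq E$ for all partial translations $f$. $[h,v_f]=hv_f-v_fh$ on $\mathrm{dom}(h)$, and $\|\cdot\|$ denotes the possibly infinite operator norm on the domain. *)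

(* Defs.v *)
From HB Require Import structures.
From mathcomp Require Import all_boot all_order all_algebra.
From mathcomp Require Import all_classical all_reals.
From mathcomp Require Import ereal esum.
From mathcomp Require Import complex.
From Stdlib Require Import List.
Set Implicit Arguments. Unset Strict Implicit. Unset Printing Implicit Defensive.
Import Order.TTheory GRing.Theory Num.Theory.
Local Open Scope ring_scope.
Local Open Scope classical_set_scope.

Section Defs.
Variables (R : realType) (X : choiceType).

Definition is_metric (d : X -> X -> R) : Prop :=
  [/\ forall x y, 0 <= d x y,
      forall x y, d x y = 0 <-> x = y,
      forall x y, d x y = d y x &
      forall x y z, d x z <= d x y + d y z].

Definition ball_set (d : X -> X -> R) (r : R) (x : X) : set X :=
  [set z | d x z <= r].

Definition unif_loc_finite (d : X -> X -> R) : Prop :=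
  forall r : R, 0 < r -> exists N : nat, forall x : X,
    exists l : list X, (length l <= N)%N /\
      forall z, ball_set d r x z -> List.In z l.

Definition coarse (d : X -> X -> R) (h : X -> R) : Prop :=
  forall r : R, 0 < r -> exists s : R, 0 < s /\
    forall x z, d x z <= r -> `|h x - h z| <= s.

Definition sqmod (z : R[i]) : R := (@complex.Re R z) ^+ 2 + (@complex.Im R z) ^+ 2.

Definition l2sq (xi : X -> R[i]) : \bar R :=
  \esum_(x in [set: X]) (sqmod (xi x))%:E.

Definition in_l2 (xi : X -> R[i]) : Prop := (l2sq xi < +oo)%E.

Definition mulop (h : X -> R) (xi : X -> R[i]) : X -> R[i] :=
  fun x => (h x)%:C%C * xi x.

Definition dom_mul (h : X -> R) : set (X -> R[i]) :=
  [set xi | in_l2 xi /\ (l2sq (mulop h xi) < +oo)%E].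

(* A partial translation f : dom(f) -> ran(f), represented by the partial
   map fwd together with its inverse bwd (fwd x = Some y iff x in dom(f)
   and f x = y; bwd is the inverse bijection ran(f) -> dom(f)). *)
Record ptrans (d : X -> X -> R) := PTrans {
  pt_fwd : X -> option X;
  pt_bwd : X -> option X;
  pt_inv : forall x y, pt_fwd x = Some y <-> pt_bwd y = Some x;
  pt_bdd : exists r : R, forall x y, pt_fwd x = Some y -> d x y <= r
}.

Definition is_rtrans (d : X -> X -> R) (r : R) (f : ptrans d) : Prop :=
  forall x y, pt_fwd f x = Some y -> d x y <= r.

(* v_f delta_x = delta_{f x} for x in dom f, 0 otherwise;
   hence (v_f xi)_y = xi_{f^-1 y} if y in ran f, 0 otherwise. *)
Definition vop (d : X -> X -> R) (f : ptrans d) (xi : X -> R[i]) : X -> R[i] :=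
  fun y => match pt_bwd f y with Some x => xi x | None => 0 end.

Definition comm (d : X -> X -> R) (h : X -> R) (f : ptrans d)
    (xi : X -> R[i]) : X -> R[i] :=
  fun y => mulop h (vop f xi) y - vop f (mulop h xi) y.

Definition opnorm_le (D : set (X -> R[i])) (T : (X -> R[i]) -> X -> R[i])
    (C : R) : Prop :=
  forall xi, D xi -> (l2sq (T xi) <= (C ^+ 2)%:E * l2sq xi)%E.

Definition dom_invariant (d : X -> X -> R) (h : X -> R) : Prop :=
  forall (f : ptrans d) xi, dom_mul h xi -> dom_mul h (vop f xi).

End Defs.

(* Main.v *)
Require Import Defs.
From HB Require Import structures.
From mathcomp Require Import all_boot all_order all_algebra.
From mathcomp Require Import all_classical all_reals.
From mathcomp Require Import ereal esum.
From mathcomp Require Import complex.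
From mathcomp Require Import ring lra.
Import Order.TTheory GRing.Theory Num.Theory.
Local Open Scope ring_scope.

Lemma sqmodM (R : realType) (p : R) (z : R[i]) : sqmod ((p%:C)%C * z) = p ^+ 2 * sqmod z.
Proof. case: z => a b; rewrite /sqmod /=. ring. Qed.
Lemma sqmodMB (R : realType) (p q : R) (z : R[i]) : sqmod ((p%:C)%C * z - (q%:C)%C * z) = (p - q) ^+ 2 * sqmod z.
Proof. case: z => a b; rewrite /sqmod /=. ring. Qed.
Lemma sqmod_ge0 (R : realType) (z : R[i]) : 0 <= sqmod z.
Proof. by rewrite /sqmod addr_ge0 // sqr_ge0. Qed.
Lemma sqmod0 (R : realType) : sqmod (0 : R[i]) = 0.
Proof. rewrite /sqmod /=. ring. Qed.
Lemma sqmod1 (R : realType) : sqmod (1 : R[i]) = 1.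
Proof. rewrite /sqmod /=. ring. Qed.

Lemma esumZ_le (R : realType) (T : choiceType) (S : set T) (a : T -> \bar R) (c : R) :
  0 <= c -> (forall i, (0 <= a i)%E) ->
  (\esum_(i in S) (c%:E * a i) <= c%:E * \esum_(i in S) a i)%E.
Proof.
move=> c0 a0; apply: ge_ereal_sup => _ [Y [finY YS] <-].
rewrite fsbig_finite //= -ge0_sume_distrr; last by move=> i _; exact: a0.
rewrite -fsbig_finite //; apply: lee_wpmul2l; first by rewrite lee_fin.
by apply: ereal_sup_ubound; exists Y.
Qed.

Lemma transfer (R : realType) (X : choiceType) (d : X -> X -> R) (f : ptrans d)
  (a : X -> R[i]) (g : X -> R) :
 (forall x, 0 <= g x) ->
 (forall y, pt_bwd f y = None -> sqmod (a y) = 0) ->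
 (forall x y, pt_bwd f y = Some x -> sqmod (a y) <= g x) ->
 (l2sq a <= \esum_(x in [set: X]) (g x)%:E)%E.
Proof.
move=> g0 aN aS.
pose G := fun y => match pt_bwd f y with Some x => g x | None => 0 end.
pose Q := [set y | pt_bwd f y <> None]%classic.
pose P := [set x | pt_fwd f x <> None]%classic.
pose e := fun x => odflt x (pt_fwd f x).
apply: (@le_trans _ _ (\esum_(x in P) (g x)%:E)%E); last first.
  rewrite [leLHS]esum_mkcond; apply: le_esum => x _.
  by case: ifP => _ //; rewrite lee_fin.
have -> : (\esum_(x in P) (g x)%:E = \esum_(x in P) (G (e x))%:E)%E.
  apply: eq_esum => x; rewrite /P /= /e /G.
  case E: (pt_fwd f x) => [y|] // _ /=.
  by move/(pt_inv f x y): E => ->.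
rewrite -(@reindex_esum _ _ _ P Q e (fun y => (G y)%:E)); last first.
  split.
  - move=> x; rewrite /P /Q /e /=; case E: (pt_fwd f x) => [y|] // _ /=.
    by move/(pt_inv f x y): E => ->.
  - move=> x1 x2; rewrite !in_setE /P /e /=.
    case E1: (pt_fwd f x1) => [y1|]; last by move=> /(_ erefl).
    case E2: (pt_fwd f x2) => [y2|]; last by move=> _ /(_ erefl).
    move=> _ _ /= eq12.
    subst y2; move/(pt_inv f x1 y1): E1; move/(pt_inv f x2 y1): E2.
    by move=> -> [->].
  - move=> y; rewrite /Q /= /mkset; case E: (pt_bwd f y) => [x|] // _.
    move/(pt_inv f x y): E => E; exists x; rewrite /P /e /= ?E //.
rewrite esum_mkcond; apply: le_esum => y _.
rewrite /Q /G /=.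
case E: (pt_bwd f y) => [x|].
  rewrite mem_set ?E //=.
  rewrite (@lee_fin R). by apply: aS E. by rewrite E.
by rewrite memNset ?E //= aN // sqmod0.
Qed.

Lemma l2sq_single (R : realType) (X : choiceType) (a : X -> R[i]) (x : X) :
  (forall y, y != x -> a y = 0) -> l2sq a = (sqmod (a x))%:E.
Proof.
move=> a0; rewrite /l2sq (esumID [set x]); last by move=> i _; rewrite lee_fin sqmod_ge0.
rewrite setTI esum_set1; last by rewrite lee_fin sqmod_ge0.
rewrite esum1 ?adde0 // => y [_ /= yx].
by rewrite a0 ?sqmod0 //; apply/eqP.
Qed.

Lemma sum_ge_mem (R : realType) (X : Type) (F : X -> R) (l : list X) (w : X) :
  (forall v, 0 <= F v) -> List.In w l -> F w <= \sum_(v <- l) F v.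
Proof.
move=> F0; elim: l => [//|a l IH] /= [->|Hin]; rewrite big_cons.
  by rewrite lerDl sumr_ge0.
by rewrite (le_trans (IH Hin)) // lerDr.
Qed.

Lemma ptrans_pos (R : realType) (X : choiceType) (d : X -> X -> R) (f : ptrans d) :
  exists r, 0 < r /\ is_rtrans r f.
Proof.
case: (pt_bdd f) => r Hr; exists (Num.max r 1); split.
  by rewrite lt_max ltr01 orbT.
by move=> x y /Hr H; rewrite le_max H.
Qed.

Lemma vop_some (R : realType) (X : choiceType) (d : X -> X -> R) (f : ptrans d) xi x y :
  pt_bwd f y = Some x -> vop f xi y = xi x.
Proof. by rewrite /vop => ->. Qed.
Arguments vop_some {R X d f xi x y}.
Lemma vop_none (R : realType) (X : choiceType) (d : X -> X -> R) (f : ptrans d) xi y :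
  pt_bwd f y = None -> vop f xi y = 0.
Proof. by rewrite /vop => ->. Qed.

Arguments vop_none {R X d f xi y}.

Lemma c12_comm (R : realType) (X : choiceType) (d : X -> X -> R) (h : X -> R)
  (r s : R) (f : ptrans d) :
  is_rtrans r f -> (forall x z, d x z <= r -> `|h x - h z| <= s) ->
  opnorm_le (dom_mul h) (comm h f) s.
Proof.
move=> fr hs xi _.
apply: (le_trans (@transfer _ _ _ f _ (fun x => s ^+ 2 * sqmod (xi x)) _ _ _)).
- by move=> x; rewrite mulr_ge0 ?sqr_ge0 ?sqmod_ge0.
- move=> y E; rewrite /comm /mulop (vop_none E) (vop_none E).
  by rewrite mulr0 subr0 sqmod0.
- move=> x y E; rewrite /comm /mulop (vop_some E) (vop_some E) sqmodMB.
  apply: ler_wpM2r; first exact: sqmod_ge0.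
  have := hs x y (fr x y (proj2 (pt_inv f x y) E)).
  rewrite ler_norml => /andP[h1 h2]; nra.
rewrite /l2sq; under eq_esum do rewrite EFinM.
apply: esumZ_le; first exact: sqr_ge0.
by move=> x; rewrite lee_fin sqmod_ge0.
Qed.

Lemma c1_inv (R : realType) (X : choiceType) (d : X -> X -> R) (h : X -> R) :
  coarse d h -> dom_invariant d h.
Proof.
move=> hc f xi [xi2 hxi2].
have [r [r0 fr]] := @ptrans_pos _ _ _ f.
have [s [s0 hs]] := hc r r0.
split.
  rewrite /in_l2; apply: le_lt_trans xi2.
  apply: (@transfer _ _ _ f _ (fun x => sqmod (xi x))).
  - by move=> x; exact: sqmod_ge0.
  - by move=> y E; rewrite (vop_none E) sqmod0.
  - by move=> x y E; rewrite (vop_some E).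
have H : (l2sq (mulop h (vop f xi)) <= \esum_(x in [set: X])
   ((2%:R)%:E * (sqmod (mulop h xi x))%:E + (2 * s ^+ 2)%:E * (sqmod (xi x))%:E))%E.
  apply: le_trans.
    apply: (@transfer _ _ _ f _ (fun x => 2%:R * sqmod (mulop h xi x) + (2 * s ^+ 2) * sqmod (xi x))).
    - by move=> x; rewrite addr_ge0 // mulr_ge0 ?sqmod_ge0 // mulr_ge0 // sqr_ge0.
    - by move=> y E; rewrite /mulop (vop_none E) mulr0 sqmod0.
    - move=> x y E; rewrite /mulop (vop_some E) !sqmodM.
      have := hs x y (fr x y (proj2 (pt_inv f x y) E)).
      rewrite ler_norml => /andP[h1 h2].
      have m0 := @sqmod_ge0 R (xi x).
      set m := sqmod (xi x) in m0 *.
      have t2 : (h x - h y) ^+ 2 <= s ^+ 2.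
        have p : 0 <= (s - (h x - h y)) * (s + (h x - h y)) by apply: mulr_ge0; lra.
        nra.
      have q : 0 <= (h x + (h x - h y)) ^+ 2 by apply: sqr_ge0.
      have : (h y) ^+ 2 <= 2 * (h x) ^+ 2 + 2 * s ^+ 2 by nra.
      move=> Hq; rewrite mulrA -mulrDl; apply: ler_wpM2r => //.
      by rewrite mulrA.
apply: le_lt_trans H _.
rewrite esumD; last 2 first.
- by move=> x _; rewrite -EFinM lee_fin mulr_ge0 ?sqmod_ge0.
- by move=> x _; rewrite -EFinM lee_fin mulr_ge0 ?sqmod_ge0 // mulr_ge0 // sqr_ge0.
apply: lte_add_pinfty.
  apply: (le_lt_trans (@esumZ_le R X setT (fun x => (sqmod (mulop h xi x))%:E) 2%:R _ _)) => //.
    by move=> x; rewrite lee_fin sqmod_ge0.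
  by apply: lte_mul_pinfty.
apply: (le_lt_trans (@esumZ_le R X setT (fun x => (sqmod (xi x))%:E) (2 * s ^+ 2) _ _)) => //.
- by rewrite mulr_ge0 // sqr_ge0.
- by move=> x; rewrite lee_fin sqmod_ge0.
by apply: lte_mul_pinfty; rewrite // lee_fin mulr_ge0 // sqr_ge0.
Qed.

Fixpoint accf {R : realType} {X : Type} (g : R -> X * X) (B : X -> R) (n : nat) : R :=
  match n with
  | 0 => 0
  | m.+1 => accf g B m + B (g (m%:R + 1 + accf g B m)).1 + B (g (m%:R + 1 + accf g B m)).2
  end.

Lemma c31 (R : realType) (X : choiceType) (d : X -> X -> R) (h : X -> R) :
  is_metric d -> unif_loc_finite d ->
  (forall f : ptrans d, exists C : R, opnorm_le (dom_mul h) (comm h f) C) ->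
  coarse d h.
Proof.
move=> [d0 dxx dsym dtri] hulf H3 r r0.
apply: contrapT => Hns.
have Hg : forall s : R, exists p : X * X, d p.1 p.2 <= r /\ s < `|h p.1 - h p.2|.
  move=> s; apply: contrapT => Hno; apply: Hns.
  exists (`|s| + 1); split; first by have := normr_ge0 s; lra.
  move=> x z dxz; apply: contrapT => nle; apply: Hno; exists (x, z); split => //=.
  rewrite ltNge; apply/negP => hle; apply: nle; apply: le_trans hle _.
  by have := ler_norm s; lra.
case: (boolp.choice Hg) => g Hgp.
have [N HN] := hulf r r0.
have HL : forall x, exists l : list X, forall z, d x z <= r -> List.In z l.
  move=> x; case: (HN x) => l [_ Hl]; exists l => z; exact: Hl.
case: (boolp.choice HL) => L HLp.
pose B := fun y => \sum_(w <- L y) `|h y - h w|.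
have B0 : forall y, 0 <= B y by move=> y; apply: sumr_ge0 => w _; exact: normr_ge0.
have BL : forall y w, d y w <= r -> `|h y - h w| <= B y.
  move=> y w dyw; apply: (@sum_ge_mem R X (fun w => `|h y - h w|)) (HLp _ _ dyw).
  by move=> v; exact: normr_ge0.
pose acc := accf g B.
pose q := fun n => g (n%:R + 1 + acc n).
have accS : forall n, acc n.+1 = acc n + B (q n).1 + B (q n).2 by [].
have acc0 : forall n, 0 <= acc n.
  elim => [|n IH]; first by rewrite /acc /=.
  rewrite accS; have := B0 (q n).1; have := B0 (q n).2; lra.
have accmono : forall m n, (m <= n)%N -> acc m <= acc n.
  move=> m n mn; rewrite -(subnK mn); elim: (n - m)%N => [//|k IH].
  rewrite addSn accS; have := B0 (q (k + m)%N).1; have := B0 (q (k + m)%N).2; lra.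
have qd : forall n, d (q n).1 (q n).2 <= r := fun n => proj1 (Hgp _).
have qh : forall n, n%:R + 1 + acc n < `|h (q n).1 - h (q n).2| := fun n => proj2 (Hgp _).
have Bk : forall k n, (k < n)%N -> B (q k).1 <= acc n /\ B (q k).2 <= acc n.
  move=> k n kn; have := accmono k.+1 n kn; rewrite accS.
  have := acc0 k; have := B0 (q k).1; have := B0 (q k).2; split; lra.
have n0 : forall n : nat, 0 <= n%:R :> R by move=> n; exact: ler0n.
have inj1 : forall k n, (k < n)%N -> (q k).1 <> (q n).1.
  move=> k n kn E.
  have h1 := BL (q n).1 (q n).2 (qd n).
  have h2 := (Bk k n kn).1; rewrite E in h2.
  have := qh n; have := acc0 n; have := n0 n; lra.
have inj2 : forall k n, (k < n)%N -> (q k).2 <> (q n).2.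
  move=> k n kn E.
  have e := qd n; rewrite dsym in e.
  have h1 := BL (q n).2 (q n).1 e.
  have h2 := (Bk k n kn).2; rewrite E in h2.
  rewrite distrC in h1.
  have := qh n; have := acc0 n; have := n0 n; lra.
have q1inj : forall m n, (q m).1 = (q n).1 -> m = n.
  move=> m n; case: (ltngtP m n) => // H E; exfalso.
    exact: (inj1 _ _ H).
  exact: (inj1 _ _ H (esym E)).
have q2inj : forall m n, (q m).2 = (q n).2 -> m = n.
  move=> m n; case: (ltngtP m n) => // H E; exfalso.
    exact: (inj2 _ _ H).
  exact: (inj2 _ _ H (esym E)).
pose fwd := fun x => match pselect (exists n, (q n).1 = x) with
  | left e => Some (q (proj1_sig (cid e))).2 | right _ => None end.
pose bwd := fun y => match pselect (exists n, (q n).2 = y) with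
  | left e => Some (q (proj1_sig (cid e))).1 | right _ => None end.
have fwdP : forall x y, fwd x = Some y <-> exists n, (q n).1 = x /\ (q n).2 = y.
  move=> x y; rewrite /fwd; case: pselect => [e|ne]; split.
  - case: (cid e) => n /= hn [<-]; by exists n.
  - case: (cid e) => n /= hn [m [hm <-]]; congr Some.
    by rewrite (q1inj n m) // hn hm.
  - by [].
  - by move=> [m [hm _]]; exfalso; apply: ne; exists m.
have bwdP : forall x y, bwd y = Some x <-> exists n, (q n).1 = x /\ (q n).2 = y.
  move=> x y; rewrite /bwd; case: pselect => [e|ne]; split.
  - case: (cid e) => n /= hn [<-]; by exists n.
  - case: (cid e) => n /= hn [m [<- hm]]; congr Some.
    by rewrite (q2inj n m) // hn hm.
  - by [].
  - by move=> [m [_ hm]]; exfalso; apply: ne; exists m.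
have inv : forall x y, fwd x = Some y <-> bwd y = Some x.
  by move=> x y; rewrite fwdP bwdP.
have bdd : exists r0 : R, forall x y, fwd x = Some y -> d x y <= r0.
  by exists r => x y /fwdP [n [<- <-]]; exact: qd.
pose f := @PTrans R X d fwd bwd inv bdd.
have [C HC] := H3 f.
have [n Hn] : exists n : nat, `|C| < n%:R.
  by exists (Num.Def.archi_bound `|C|); apply: archi_boundP; exact: normr_ge0.
set x := (q n).1; set z := (q n).2.
pose del := fun y : X => if y == x then (1 : R[i]) else 0.
have dl : l2sq del = 1%:E.
  rewrite (@l2sq_single R X del x); first by rewrite /del eqxx sqmod1.
  by move=> y /negbTE; rewrite /del => ->.
have dom : dom_mul h del.
  split; first by rewrite /in_l2 dl ltry.
  rewrite (@l2sq_single R X _ x) ?ltry //.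
  by move=> y /negbTE; rewrite /mulop /del => ->; rewrite mulr0.
have := HC del dom; rewrite dl mule1.
have fxz : fwd x = Some z by apply/fwdP; exists n.
have bzx : bwd z = Some x by apply/bwdP; exists n.
rewrite (@l2sq_single R X _ z); last first.
  move=> y yz; rewrite /comm /mulop.
  case E: (pt_bwd f y) => [x'|]; last by rewrite (vop_none E) (vop_none E) mulr0 subr0.
  rewrite (vop_some E) (vop_some E).
  have x'x : x' != x.
    apply/negP => /eqP ex; move: E; rewrite ex /= => /(proj2 (inv x y)).
    by rewrite fxz => -[zy]; move: yz; rewrite zy eqxx.
  by rewrite /del (negbTE x'x) !mulr0 subr0.
rewrite /comm /mulop (@vop_some R X d f _ x z bzx) (@vop_some R X d f _ x z bzx).
rewrite sqmodMB /del eqxx sqmod1 mulr1 (@lee_fin R).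
have := qh n; rewrite -/x -/z => hq.
have := acc0 n; have := n0 n => a1 a2.
have lt : `|C| < `|h x - h z| by lra.
have -> : (h z - h x) ^+ 2 = `|h x - h z| ^+ 2.
  by rewrite real_normK ?num_real // -sqrrN opprB.
rewrite -(real_normK (num_real C)) => hle.
have := normr_ge0 C; nra.
Qed.

Theorem proposition3p1p5 (R : realType) (X : choiceType) (d : X -> X -> R)
  (hd : is_metric d) (hulf : unif_loc_finite d) (h : X -> R) :
  [<-> coarse d h;
       dom_invariant d h /\
         (forall r : R, 0 < r -> exists C : R, forall f : ptrans d,
            is_rtrans r f -> opnorm_le (dom_mul h) (comm h f) C);
       dom_invariant d h /\
         (forall f : ptrans d, exists C : R,
            opnorm_le (dom_mul h) (comm h f) C)].
Proof.
tfae.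
- move=> hc; split; first exact: c1_inv.
  move=> r r0; have [s [s0 hs]] := hc r r0; exists s => f fr.
  exact: (@c12_comm R X d h r s f fr hs).
- move=> [hi hb]; split => // f.
  have [r [r0 fr]] := @ptrans_pos _ _ _ f.
  have [C HC] := hb r r0; exists C; exact: HC.
- by move=> [_ H]; apply: c31.
Qed.
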